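(* Let $u\in(0,\frac12)$ and let $\{p_i\}_{i\in\mathcal{I}}$ be a finite nonempty family with $p_i\in[u,\frac12]$ for all $i\in\mathcal{I}$. Then $$\frac{\sqrt{\sum_{i\in\mathcal{I}}p_i^3(1-p_i)}}{\sum_{i\in\mathcal{I}}p_i(1-p_i)}\le\frac{1+2u+4u^2-8u^3}{\sqrt{16|\mathcal{I}|\,u\,(1-u-4u^2+4u^3)}}.$$ *)

(* Defs.v *)
(* the inequality is purely algebraic (uses only square roots),
   so it is stated over an arbitrary real closed field R (which includes the reals). *)
From HB Require Import structures.
From mathcomp Require Import all_boot all_order all_algebra.
Set Implicit Arguments. Unset Strict Implicit. Unset Printing Implicit Defensive.

(* Main.v *)
Require Import Defs.
From Stdlib Require Import Ring.
From HB Require Import structures.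
From mathcomp Require Import all_boot all_order all_algebra.
Import Order.TTheory GRing.Theory Num.Theory.

Section G.
Variables (T : Type) (z o : T) (ad mu : T -> T -> T) (sb : T -> T -> T) (op : T -> T).
Hypothesis H : ring_theory z o ad mu sb op (@eq T).
Add Ring G : H.
Local Notation "x + y" := (ad x y).
Local Notation "x * y" := (mu x y).
Local Notation "x - y" := (sb x y).
Local Notation "1" := o.
Lemma genA n2 n4 n8 p u : n2 = 1 + 1 -> n4 = n2 + n2 -> n8 = n4 + n4 ->
  (p-u) * (1-n2 * p) * (1 + (1-n2 * u) * (1-n2 * p) * (p+u)) = (1+n2 * u+n4 * (u * u)-n8 * (u * (u * u))) * p * (1-p) - u * (1-u) * (1+n2 * u) - n4 * (1-n2 * u) * ((p * (p * p)) * (1-p)).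
Proof. move=> -> -> ->; ring. Qed.
Lemma genB n2 n4 n8 n16 n u t : n2 = 1 + 1 -> n4 = n2 + n2 -> n8 = n4 + n4 -> n16 = n8 + n8 ->
  t * (n16 * n * u * (1 - u - n4 * (u * u) + n4 * (u * (u * u))))
  = n4 * (n * (u * (1 - u)) * (1 + n2 * u)) * (n4 * (1 - n2 * u) * t).
Proof. move=> -> -> -> ->; ring. Qed.
Lemma genC n2 n4 x m : n2 = 1 + 1 -> n4 = n2 + n2 ->
  x * x - n4 * m * (x - m) = (x - n2 * m) * (x - n2 * m).
Proof. move=> -> ->; ring. Qed.
Lemma genD n2 n4 n8 u : n2 = 1 + 1 -> n4 = n2 + n2 -> n8 = n4 + n4 ->
  1+n2 * u+n4 * (u * u)-n8 * (u * (u * u)) = 1 + n2 * u + n4 * (u * u) * (1 - n2 * u).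
Proof. move=> -> -> ->; ring. Qed.
End G.

Local Open Scope ring_scope.

Section S.
Variable R : rcfType.
Lemma Rth : @ring_theory R 0 1 +%R *%R (fun x y => x - y) -%R eq.
Proof. constructor=> *; [exact: add0r|exact: addrC|exact: addrA|exact: mul1r|exact: mulrC|exact: mulrA|exact: mulrDl|by []|exact: subrr]. Qed.
Lemma n2 : (2 : R) = 1 + 1. Proof. by rewrite mulr2n. Qed.
Lemma n4 : (4 : R) = 2 + 2. Proof. by rewrite -natrD. Qed.
Lemma n8 : (8 : R) = 4 + 4. Proof. by rewrite -natrD. Qed.
Lemma n16 : (16 : R) = 8 + 8. Proof. by rewrite -natrD. Qed.
Lemma idA (p u : R) : (p-u) * (1-2 * p) * (1 + (1-2 * u) * (1-2 * p) * (p+u)) = (1+2 * u+4 * u^+2-8 * u^+3) * p * (1-p) - u * (1-u) * (1+2 * u) - 4 * (1-2 * u) * (p^+3 * (1-p)).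
Proof. exact: (@genA _ _ _ _ _ _ _ Rth _ _ _ p u n2 n4 n8). Qed.
Lemma idB (n u t : R) : t * (16 * n * u * (1 - u - 4 * u ^+ 2 + 4 * u ^+ 3))
  = 4 * (n * (u * (1 - u)) * (1 + 2 * u)) * (4 * (1 - 2 * u) * t).
Proof. exact: (@genB _ _ _ _ _ _ _ Rth _ _ _ _ n u t n2 n4 n8 n16). Qed.
Lemma idC (x m : R) : x ^+ 2 - 4 * m * (x - m) = (x - 2 * m) ^+ 2.
Proof. exact: (@genC _ _ _ _ _ _ _ Rth _ _ x m n2 n4). Qed.
Lemma idD (u : R) : 1 + 2 * u + 4 * u ^+ 2 - 8 * u ^+ 3 = 1 + 2 * u + 4 * u ^+ 2 * (1 - 2 * u).
Proof. exact: (@genD _ _ _ _ _ _ _ Rth _ _ _ u n2 n4 n8). Qed.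
End S.

Theorem mainTheorem14 (R : rcfType) (I : finType) (p : I -> R) (u : R)
  (hu0 : 0 < u) (hu1 : u < 1 / 2) (hI : (0 < #|I|)%N)
  (hp : forall i, u <= p i <= 1 / 2) :
  Num.sqrt (\sum_(i : I) p i ^+ 3 * (1 - p i)) / (\sum_(i : I) p i * (1 - p i))
  <= (1 + 2 * u + 4 * u ^+ 2 - 8 * u ^+ 3)
     / Num.sqrt (16 * (#|I|)%:R * u * (1 - u - 4 * u ^+ 2 + 4 * u ^+ 3)).
Proof.
set C := (1 + 2 * u + 4 * u ^+ 2 - 8 * u ^+ 3).
set n := (#|I|)%:R : R.
set S := \sum_(i : I) p i * (1 - p i).
set Tt := \sum_(i : I) p i ^+ 3 * (1 - p i).
have k0 : 0 < 1 - 2 * u.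
  by rewrite subr_gt0 mulrC -ltr_pdivlMr // mul1r.
have hp2 : forall i, u <= p i /\ 2 * p i <= 1.
  move=> i; have /andP[a b] := hp i; split=> //.
  by rewrite mulrC -ler_pdivlMr // mul1r.
have n0 : 0 < n by rewrite ltr0n.
have u1 : 0 < 1 - u.
  rewrite subr_gt0; apply: lt_trans hu1 _.
  by rewrite ltr_pdivrMr // mul1r ltr1n.
have key : forall i, 4 * (1 - 2 * u) * (p i ^+ 3 * (1 - p i))
    <= C * (p i * (1 - p i)) - u * (1 - u) * (1 + 2 * u).
  move=> i; have [a b] := hp2 i.
  have p0 : 0 <= p i by apply: le_trans a; apply: ltW.
  rewrite -subr_ge0 mulrA -idA; apply: mulr_ge0; [apply: mulr_ge0|].
  - by rewrite subr_ge0.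
  - by rewrite subr_ge0.
  apply: addr_ge0 => //; apply: mulr_ge0; [apply: mulr_ge0|].
  - exact: ltW.
  - by rewrite subr_ge0.
  by apply: addr_ge0 => //; apply: ltW.
have hsum : 4 * (1 - 2 * u) * Tt <= C * S - n * (u * (1 - u) * (1 + 2 * u)).
  rewrite /Tt mulr_sumr; apply: le_trans (ler_sum _ (fun i _ => key i)) _.
  by rewrite sumrB -mulr_sumr sumr_const -(mulr_natl (u * (1 - u) * (1 + 2 * u))) /n.
have T0 : 0 <= Tt.
  apply: sumr_ge0 => i _; have [a b] := hp2 i.
  have p0 : 0 <= p i by apply: le_trans a; apply: ltW.
  apply: mulr_ge0; first exact: exprn_ge0.
  rewrite subr_ge0; apply: le_trans b.
  by rewrite -{1}[p i]mul1r ler_wpM2r // ler1n.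
have m0 : 0 < n * (u * (1 - u)) * (1 + 2 * u).
  apply: mulr_gt0; first by apply: mulr_gt0 => //; apply: mulr_gt0.
  by apply: addr_gt0 => //; apply: mulr_gt0.
have C0 : 0 < C.
  have h : 0 < 1 + 2 * u by apply: addr_gt0 => //; apply: mulr_gt0.
  rewrite /C idD; apply: lt_le_trans h _; rewrite lerDl.
  apply: mulr_ge0; last exact: ltW.
  by apply: mulr_ge0 => //; apply: exprn_ge0; apply: ltW.
have CS0 : 0 < C * S.
  have h1 : 0 <= 4 * (1 - 2 * u) * Tt.
    by apply: mulr_ge0 => //; apply: mulr_ge0 => //; apply: ltW.
  have := le_trans h1 hsum; rewrite subr_ge0 => h2.
  rewrite mulrA in h2; exact: lt_le_trans m0 h2.
have S0 : 0 < S by rewrite -(pmulr_rgt0 _ C0).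
have D0 : 0 < 16 * n * u * (1 - u - 4 * u ^+ 2 + 4 * u ^+ 3).
  rewrite -[X in 0 < X]mul1r idB; apply: mulr_gt0; first by apply: mulr_gt0.
  by rewrite mulr1; apply: mulr_gt0.
rewrite ler_pdivrMr // mulrAC ler_pdivlMr ?sqrtr_gt0 // -sqrtrM //.
rewrite -[C * S]ger0_norm; last exact: ltW.
rewrite -sqrtr_sqr; apply: ler_wsqrtr.
rewrite idB.
apply: le_trans (ler_wpM2l _ hsum) _; first by apply: mulr_ge0 => //; apply: ltW.
rewrite -subr_ge0 [n * (_ * _ * _)]mulrA idC; exact: sqr_ge0.
Qed.
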